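(* Let $\mathcal{A}=(A,B,s,t,\Delta)$ be a left multiplier bialgebroid with associated maps $\widetilde{T_\lambda},\widetilde{T_\rho}$. Regard $t$ as a homomorphism and $s$ as an anti-homomorphism from $B^{\mathrm{op}}$ to $M(A)$, let $\varsigma$ be the algebra isomorphism from the left target algebra $A\bar\times_BA$ of $\mathcal{A}$ onto the left target algebra $A\bar\times_{B^{\mathrm{op}}}A$ for $(A,B^{\mathrm{op}},t,s)$ induced by the flip $\Sigma\colon{}_BA\otimes A^B\to{}_{B^{\mathrm{op}}}A\otimes A^{B^{\mathrm{op}}}$, $a\otimes b\mapsto b\otimes a$ (i.e. $\varsigma(T)=\Sigma T\Sigma^{-1}$), and let $\Delta^{\mathrm{co}}=\varsigma\circ\Delta$. Then $\mathcal{A}^{\mathrm{co}}=(A,B^{\mathrm{op}},t,s,\Delta^{\mathrm{co}})$ is a left multiplier bialgebroid, and its associated maps are $\widetilde{T_\lambda}^{\mathrm{co}}=\Sigma\circ\widetilde{T_\rho}\circ\Sigma_{(A,A)}$ and $\widetilde{T_\rho}^{\mathrm{co}}=\Sigma\circ\widetilde{T_\lambda}\circ\Sigma_{(A,A)}$, where $\Sigma_{(A,A)}$ is the flip on $A\otimes A$.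
   Context: All algebras are associative complex algebras, not necessarily unital. For an algebra $A$ with $A_A$ non-degenerate (if $ab=0$ for all $b$ then $a=0$), $L(A)$ denotes the right $A$-module endomorphisms of $A$ (containing $A$ via left multiplication) and $M(A)=\{T\in L(A):aT\in A\ \forall a\}$. A left multiplier bialgebroid is a tuple $(A,B,s,t,\Delta)$ where: (i) $A,B$ are algebras, $A_A$ is non-degenerate and idempotent ($AA=A$); (ii) $s\colon B\to M(A)$ is a homomorphism and $t\colon B\to M(A)$ an anti-homomorphism with $s(x)t(y)=t(y)s(x)$, $s,t$ injective, $s(B)A=A=t(B)A$; ${}_BA\otimes A^B$, the quotient of $A\otimes A$ by the span of $s(x)a\otimes b-a\otimes t(x)b$, is non-degenerate as a right module over $A\otimes1$ and over $1\otimes A$; (iii) $\Delta$ is an algebra homomorphism into the algebra $A\bar\times_BA$ of linear endomorphisms $T$ of ${}_BA\otimes A^B$ such that for all $a,b\in A$ there are $T(a\otimes1),T(1\otimes b)\in{}_BA\otimes A^B$ with $T(a\otimes b)=T(a\otimes1)(1\otimes b)=T(1\otimes b)(a\otimes1)$; (iv) $\Delta(s(x)t(y)as(x')t(y'))=(t(y)\otimes s(x))\Delta(a)(t(y')\otimes s(x'))$ for $a\in A$, $x,y,x',y'\in B$; (v) for all $a,b,c\in A$: if $\Delta(b)(1\otimes c)=\sum_ip_i\otimes q_i$ and $\Delta(b)(a\otimes1)=\sum_ju_j\otimes v_j$, then $\sum_i\Delta(p_i)(a\otimes1)\otimes q_i=\sum_ju_j\otimes\Delta(v_j)(1\otimes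 c)$ in the quotient of $A^{\otimes3}$ by the span of $s(x)a\otimes b\otimes c-a\otimes t(x)b\otimes c$ and $a\otimes s(x)b\otimes c-a\otimes b\otimes t(x)c$. Its associated maps are $\widetilde{T_\lambda},\widetilde{T_\rho}\colon A\otimes A\to{}_BA\otimes A^B$, $\widetilde{T_\lambda}(a\otimes b)=\Delta(b)(a\otimes1)$, $\widetilde{T_\rho}(a\otimes b)=\Delta(a)(1\otimes b)$. *)

(* Defs.v *)
(* Left multiplier bialgebroids (Timmermann / Van Daele),
   formalized with tensor products presented by finite formal sums of
   simple tensors, identified via the universal property. *)
From HB Require Import structures.
From mathcomp Require Import all_boot all_algebra.
From mathcomp Require Import complex Rstruct.

Set Implicit Arguments.
Unset Strict Implicit.
Unset Printing Implicit Defensive.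

Import GRing.Theory.
Local Open Scope ring_scope.

Definition CC : fieldType := (Rdefinitions.R)[i].

Section NUAlg.
Variable K : fieldType.

Definition is_nualg (A : lmodType K) (mul : A -> A -> A) : Prop :=
  [/\ forall a b c, mul a (mul b c) = mul (mul a b) c,
      forall a b c, mul (a + b) c = mul a c + mul b c,
      forall a b c, mul a (b + c) = mul a b + mul a c,
      forall (k : K) a b, mul (k *: a) b = k *: mul a b &
      forall (k : K) a b, mul a (k *: b) = k *: mul a b].

Definition opmul (B : lmodType K) (mul : B -> B -> B) : B -> B -> B :=
  fun x y => mul y x.

End NUAlg.

Section LMB.
Variable K : fieldType.
Variables (A : lmodType K) (mulA : A -> A -> A).
Variables (B : lmodType K) (mulB : B -> B -> B).

Definition right_nondeg : Prop :=
  forall a : A, (forall b, mulA a b = 0) -> a = 0.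

Definition idempotent_alg : Prop :=
  forall a : A, exists l : seq (A * A), a = \sum_(p <- l) mulA p.1 p.2.

(* A multiplier in M(A): L is its action on the left of A (an element of
   L(A), i.e. a right A-module endomorphism), R a ↦ a T its action on the
   right (aT ∈ A is characterised by (aT) b = a (T b)). *)
Definition is_multiplier (L R : A -> A) : Prop :=
  [/\ forall a b, L (a + b) = L a + L b,
      forall (k : K) a, L (k *: a) = k *: L a,
      forall a b, L (mulA a b) = mulA (L a) b &
      forall a b, mulA (R a) b = mulA a (L b)].

(* f : B -> M(A) (left/right actions fL, fR) is a linear map into M(A) *)
Definition mult_linear (fL fR : B -> A -> A) : Prop :=
  [/\ forall x, is_multiplier (fL x) (fR x),
      forall x y a, fL (x + y) a = fL x a + fL y a &
      forall (k : K) x a, fL (k *: x) a = k *: fL x a].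

Definition mult_hom (fL fR : B -> A -> A) : Prop :=
  mult_linear fL fR /\ forall x y a, fL (mulB x y) a = fL x (fL y a).

Definition mult_antihom (fL fR : B -> A -> A) : Prop :=
  mult_linear fL fR /\ forall x y a, fL (mulB x y) a = fL y (fL x a).

Definition mult_injective (fL : B -> A -> A) : Prop :=
  forall x y, (forall a, fL x a = fL y a) -> x = y.

Definition mult_spans (fL : B -> A -> A) : Prop :=
  forall a : A, exists l : seq (B * A), a = \sum_(p <- l) fL p.1 p.2.

Variables (sL sR tL tR : B -> A -> A).

Definition balanced2 (V : lmodType K) (phi : A -> A -> V) : Prop :=
  [/\ forall a a' b, phi (a + a') b = phi a b + phi a' b,
      forall a b b', phi a (b + b') = phi a b + phi a b',
      forall (k : K) a b, phi (k *: a) b = k *: phi a b,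
      forall (k : K) a b, phi a (k *: b) = k *: phi a b &
      forall x a b, phi (sL x a) b = phi a (tL x b)].

(* equality in _B A ⊗ A^B of the formal sums  Σ p.1 ⊗ p.2 *)
Definition teq (l1 l2 : seq (A * A)) : Prop :=
  forall (V : lmodType K) (phi : A -> A -> V), balanced2 phi ->
    \sum_(p <- l1) phi p.1 p.2 = \sum_(p <- l2) phi p.1 p.2.

(* the threefold quotient of A ⊗ A ⊗ A *)
Definition balanced3 (V : lmodType K) (phi : A -> A -> A -> V) : Prop :=
  [/\ forall a a' b c, phi (a + a') b c = phi a b c + phi a' b c,
      forall a b b' c, phi a (b + b') c = phi a b c + phi a b' c &
      forall a b c c', phi a b (c + c') = phi a b c + phi a b c'] /\
  [/\ forall (k : K) a b c, phi (k *: a) b c = k *: phi a b c,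
      forall (k : K) a b c, phi a (k *: b) c = k *: phi a b c &
      forall (k : K) a b c, phi a b (k *: c) = k *: phi a b c] /\
  (forall x a b c, phi (sL x a) b c = phi a (tL x b) c) /\
  (forall x a b c, phi a (sL x b) c = phi a b (tL x c)).

Definition teq3 (l1 l2 : seq (A * A * A)) : Prop :=
  forall (V : lmodType K) (phi : A -> A -> A -> V), balanced3 phi ->
    \sum_(p <- l1) phi p.1.1 p.1.2 p.2 = \sum_(p <- l2) phi p.1.1 p.1.2 p.2.

Definition tscale (k : K) (l : seq (A * A)) := [seq (k *: p.1, p.2) | p <- l].
Definition ract1 (c : A) (l : seq (A * A)) := [seq (mulA p.1 c, p.2) | p <- l].
Definition ract2 (c : A) (l : seq (A * A)) := [seq (p.1, mulA p.2 c) | p <- l].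
Definition lmul2 (f g : A -> A) (l : seq (A * A)) := [seq (f p.1, g p.2) | p <- l].

Definition tensor_nondeg : Prop :=
  (forall l, (forall c, teq (ract1 c l) [::]) -> teq l [::]) /\
  (forall l, (forall c, teq (ract2 c l) [::]) -> teq l [::]).

(* T : endomorphism of formal sums inducing a linear endomorphism of
   _B A ⊗ A^B lying in the left target algebra A ×̄_B A *)
Definition in_ltarget (T : seq (A * A) -> seq (A * A)) : Prop :=
  [/\ forall l1 l2, teq l1 l2 -> teq (T l1) (T l2),
      forall l1 l2, teq (T (l1 ++ l2)) (T l1 ++ T l2),
      forall k l, teq (T (tscale k l)) (tscale k (T l)),
      (* T(a ⊗ 1) exists *)
      forall a, exists X, forall b, teq (T [:: (a, b)]) (ract2 b X) &
      (* T(1 ⊗ b) exists *)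
      forall b, exists Y, forall a, teq (T [:: (a, b)]) (ract1 a Y)].

Definition lteq (T T' : seq (A * A) -> seq (A * A)) : Prop :=
  forall l, teq (T l) (T' l).

Variable D : A -> seq (A * A) -> seq (A * A).

(* X represents  Δ(b)(a ⊗ 1) = T~_λ(a ⊗ b) *)
Definition TLrep (a b : A) (X : seq (A * A)) : Prop :=
  forall c, teq (D b [:: (a, c)]) (ract2 c X).
(* X represents  Δ(a)(1 ⊗ b) = T~_ρ(a ⊗ b) *)
Definition TRrep (a b : A) (X : seq (A * A)) : Prop :=
  forall c, teq (D a [:: (c, b)]) (ract1 c X).

Definition is_LMB : Prop :=
  [/\
      [/\ is_nualg mulA, is_nualg mulB, right_nondeg & idempotent_alg],
      [/\ mult_hom sL sR, mult_antihom tL tR &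
          forall x y a, sL x (tL y a) = tL y (sL x a)] /\
      [/\ mult_injective sL, mult_injective tL,
          mult_spans sL, mult_spans tL & tensor_nondeg],
      [/\ forall a, in_ltarget (D a),
          forall a b, lteq (D (a + b)) (fun l => D a l ++ D b l),
          forall (k : K) a, lteq (D (k *: a)) (fun l => tscale k (D a l)) &
          forall a b, lteq (D (mulA a b)) (fun l => D a (D b l))],
      forall x y x' y' a,
        lteq (D (tR y' (sR x' (sL x (tL y a)))))
             (fun l => lmul2 (tL y) (sL x) (D a (lmul2 (tL y') (sL x') l))) &
      (* (v) coassociativity, for all decompositions
         Δ(b)(1⊗c) = Σ p_i ⊗ q_i, Δ(b)(a⊗1) = Σ u_j ⊗ v_j,
         Δ(p_i)(a⊗1) = R_i, Δ(v_j)(1⊗c) = S_j *)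
      forall (a b c : A) (PR US : seq (A * A * seq (A * A))),
        TRrep b c [seq t.1 | t <- PR] ->
        TLrep a b [seq t.1 | t <- US] ->
        (forall t, t \in PR -> TLrep a t.1.1 t.2) ->
        (forall t, t \in US -> TRrep t.1.2 c t.2) ->
        teq3 (flatten [seq [seq (r.1, r.2, t.1.2) | r <- t.2] | t <- PR])
             (flatten [seq [seq (t.1.1, r.1, r.2) | r <- t.2] | t <- US])].

End LMB.

Definition tflip (K : fieldType) (A : lmodType K) (l : seq (A * A)) : seq (A * A) :=
  [seq (p.2, p.1) | p <- l].

Definition Dco (K : fieldType) (A : lmodType K) (D : A -> seq (A * A) -> seq (A * A))
  : A -> seq (A * A) -> seq (A * A) :=
  fun a l => tflip (D a (tflip l)).

(* Main.v *)
Require Import Defs.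
From HB Require Import structures.
From mathcomp Require Import all_boot all_algebra.

Set Implicit Arguments.
Unset Strict Implicit.
Unset Printing Implicit Defensive.
Import GRing.Theory.
Local Open Scope ring_scope.

Section Aux.
Variable K : fieldType.
Variables (A B : lmodType K) (mulA : A -> A -> A).
Implicit Types (l : seq (A * A)) (sL tL : B -> A -> A).

Lemma tflipK l : tflip (tflip l) = l.
Proof. rewrite /tflip -map_comp -[RHS]map_id; by apply: eq_map => -[]. Qed.

Lemma tflip_cat l1 l2 : tflip (l1 ++ l2) = tflip l1 ++ tflip l2.
Proof. exact: map_cat. Qed.

Lemma tflip_ract1 c l : tflip (ract1 mulA c l) = ract2 mulA c (tflip l).
Proof. by rewrite /tflip /ract1 /ract2 -!map_comp. Qed.

Lemma tflip_ract2 c l : tflip (ract2 mulA c l) = ract1 mulA c (tflip l).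
Proof. by rewrite /tflip /ract1 /ract2 -!map_comp. Qed.

Lemma tflip_lmul2 f g l : tflip (lmul2 f g l) = lmul2 g f (tflip l).
Proof. by rewrite /tflip /lmul2 -!map_comp. Qed.

Definition tscale2 (k : K) l := [seq (p.1, k *: p.2) | p <- l].

Lemma tflip_tscale k l : tflip (tscale k l) = tscale2 k (tflip l).
Proof. by rewrite /tflip /tscale /tscale2 -!map_comp. Qed.

Lemma teq_refl sL tL l : teq sL tL l l.
Proof. by []. Qed.
Lemma teq_sym sL tL l1 l2 : teq sL tL l1 l2 -> teq sL tL l2 l1.
Proof. by move=> H V phi b; rewrite (H V phi b). Qed.
Lemma teq_trans sL tL l1 l2 l3 :
  teq sL tL l1 l2 -> teq sL tL l2 l3 -> teq sL tL l1 l3.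
Proof. by move=> H1 H2 V phi b; rewrite (H1 V phi b) (H2 V phi b). Qed.

Lemma teq_tscale2 sL tL k l : teq sL tL (tscale2 k l) (tscale k l).
Proof.
move=> V phi [h1 h2 h3 h4 h5]; rewrite !big_map; apply: eq_bigr => p _ /=.
by rewrite h3 h4.
Qed.

Lemma teq_flip sL tL l1 l2 :
  teq tL sL l1 l2 -> teq sL tL (tflip l1) (tflip l2).
Proof.
move=> H V phi [h1 h2 h3 h4 h5]; rewrite /tflip !big_map /=.
apply: (H V (fun a b => phi b a)).
split=> [a a' b|a b b'|k a b|k a b|x a b]; by rewrite ?h1 ?h2 ?h3 ?h4 ?h5.
Qed.

Lemma teq_unflip sL tL l1 l2 :
  teq sL tL (tflip l1) (tflip l2) -> teq tL sL l1 l2.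
Proof. by move=> /(@teq_flip tL sL); rewrite !tflipK. Qed.

Lemma tflip1 (x y : A) : tflip [:: (x, y)] = [:: (y, x)].
Proof. by []. Qed.

Variable D : A -> seq (A * A) -> seq (A * A).
Variables sL tL : B -> A -> A.

Lemma TLrep_co a b X :
  TLrep mulA tL sL (Dco D) a b X <-> TRrep mulA sL tL D b a (tflip X).
Proof.
split=> H c.
  have := teq_flip (H c); by rewrite /Dco tflip1 tflipK tflip_ract2.
apply: teq_unflip; rewrite /Dco tflip1 tflipK tflip_ract2; exact: H.
Qed.

Lemma TRrep_co a b X :
  TRrep mulA tL sL (Dco D) a b X <-> TLrep mulA sL tL D b a (tflip X).
Proof.
split=> H c.
  have := teq_flip (H c); by rewrite /Dco tflip1 tflipK tflip_ract1.
apply: teq_unflip; rewrite /Dco tflip1 tflipK tflip_ract1; exact: H.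
Qed.

End Aux.
Arguments teq_trans {K A B sL tL l1 l2 l3} _ _ V phi _.
Arguments teq_sym {K A B sL tL l1 l2} _ V phi _.
Arguments teq_flip {K A B sL tL l1 l2} _ V phi _.
Arguments teq_unflip {K A B sL tL l1 l2} _ V phi _.
Arguments teq_tscale2 {K A B sL tL k l} V phi _.

Theorem proposition2p7
  (A : lmodType CC) (mulA : A -> A -> A)
  (B : lmodType CC) (mulB : B -> B -> B)
  (sL sR tL tR : B -> A -> A) (D : A -> seq (A * A) -> seq (A * A)) :
  is_LMB mulA mulB sL sR tL tR D ->
  [/\ is_LMB mulA (opmul mulB) tL tR sL sR (Dco D),
      (* T~_λ^co = Σ ∘ T~_ρ ∘ Σ_(A,A) *)
      forall (a b : A) (X : seq (A * A)),
        TRrep mulA sL tL D b a X -> TLrep mulA tL sL (Dco D) a b (tflip X) &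
      (* T~_ρ^co = Σ ∘ T~_λ ∘ Σ_(A,A) *)
      forall (a b : A) (X : seq (A * A)),
        TLrep mulA sL tL D b a X -> TRrep mulA tL sL (Dco D) a b (tflip X)].
Proof.
move=> [[nuA nuB nd idem] [[sh th comm] [si ti ss ts [tnd1 tnd2]]]
        [inlt Dadd Dsc Dmul] Div Dv].
split; last first.
- by move=> a b X H; apply/TRrep_co; rewrite tflipK.
- by move=> a b X H; apply/TLrep_co; rewrite tflipK.
split.
-
  split=> //.
  case: nuB => as1 ad1 ad2 sc1 sc2; rewrite /opmul.
  split=> *; by rewrite ?as1 ?ad1 ?ad2 ?sc1 ?sc2.
-
  case: sh => slin shm; case: th => tlin thm.
  split; split=> //.
  + by split=> // x y a; rewrite /opmul thm.
  + by split=> // x y a; rewrite /opmul shm.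
  + split=> l H; apply: teq_unflip; [apply: tnd2|apply: tnd1] => c;
      have /= := teq_flip (H c); by rewrite ?tflip_ract1 ?tflip_ract2.
-
  split.
  + move=> a; case: (inlt a) => h1 h2 h3 h4 h5; split.
    * move=> l1 l2 H; apply: teq_unflip; rewrite /Dco !tflipK.
      by apply: h1; apply: teq_flip.
    * move=> l1 l2; apply: teq_unflip; rewrite /Dco !tflip_cat !tflipK.
      exact: h2.
    * move=> k l; apply: teq_unflip; rewrite /Dco !tflip_tscale !tflipK.
      apply: teq_trans (h1 _ _ teq_tscale2) _.
      apply: teq_trans (h3 _ _) _; apply: teq_sym; exact: teq_tscale2.
    * move=> a0; case: (h5 a0) => Y HY; exists (tflip Y) => b0.
      apply: teq_unflip; rewrite /Dco tflip1 tflipK tflip_ract2 tflipK; exact: HY.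
    * move=> b0; case: (h4 b0) => Y HY; exists (tflip Y) => a0.
      apply: teq_unflip; rewrite /Dco tflip1 tflipK tflip_ract1 tflipK; exact: HY.
  + move=> a b l; apply: teq_unflip; rewrite /Dco !tflip_cat !tflipK.
    exact: Dadd.
  + move=> k a l; apply: teq_unflip; rewrite /Dco tflipK tflip_tscale tflipK.
    apply: teq_trans (Dsc _ _ _) _; apply: teq_sym; exact: teq_tscale2.
  + move=> a b l; apply: teq_unflip; rewrite /Dco !tflipK; exact: Dmul.
-
  move=> x y x' y' a.
  have RR : forall z, sR y' (tR x' z) = tR x' (sR y' z).
    move=> z; case: sh => -[smul _ _] _; case: th => -[tmul _ _] _.
    case: (smul y') => _ _ _ sm; case: (tmul x') => _ _ _ tm.
    case: nuA => _ addl _ _ _.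
    apply/eqP; rewrite -subr_eq0; apply/eqP; apply: nd => c.
    have E : mulA (sR y' (tR x' z) - tR x' (sR y' z)) c =
       mulA (sR y' (tR x' z)) c - mulA (tR x' (sR y' z)) c.
      by apply/eqP; rewrite eq_sym subr_eq -addl subrK.
    by rewrite E sm tm tm sm comm subrr.
  rewrite RR -comm => l; apply: teq_unflip; rewrite /Dco tflipK tflip_lmul2 tflipK
    tflip_lmul2.
  exact: Div.
-
  move=> a b c PR US H1 H2 H3 H4.
  pose f := fun t : A * A * seq (A * A) => ((t.1.2, t.1.1), tflip t.2).
  have e1 : forall L, [seq t.1 | t <- map f L] = tflip [seq t.1 | t <- L].
    by move=> L; rewrite /tflip -!map_comp.
  have := Dv c b a (map f US) (map f PR).
  rewrite !e1; move/(_ (proj1 (TLrep_co _ _ _ _ _ _ _) H2)).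
  move/(_ (proj1 (TRrep_co _ _ _ _ _ _ _) H1)).
  have G1 : forall t, t \in map f US -> TLrep mulA sL tL D c t.1.1 t.2.
    by move=> t /mapP [t0 Ht0 ->] /=; apply/TRrep_co; exact: H4.
  have G2 : forall t, t \in map f PR -> TRrep mulA sL tL D t.1.2 a t.2.
    by move=> t /mapP [t0 Ht0 ->] /=; apply/TLrep_co; exact: H3.
  move=> /(_ G1 G2) T V phi [[p1 p2 p3] [[q1 q2 q3] [b1 b2]]].
  have bal : balanced3 sL tL (fun x y z => phi z y x).
    split; [split|split; [split|split]] => *; by rewrite ?p1 ?p2 ?p3 ?q1 ?q2 ?q3 ?b1 ?b2.
  have := T V _ bal.
  rewrite !big_flatten /= !big_map /=.
  rewrite /tflip.
  under eq_bigr => j _ do rewrite !big_map /=.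
  under [X in _ = X -> _]eq_bigr => j _ do rewrite !big_map /=.
  under [X in _ -> X = _]eq_bigr => j _ do rewrite !big_map /=.
  under [X in _ -> _ = X]eq_bigr => j _ do rewrite !big_map /=.
  by move=> ->.
Qed.
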